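(* Let $S$ be a TBLS search with strict partial order $\prec_S$ on $P_f(\mathbb{N}^+)$, and let $G=(V,E)$ be a graph. An ordering $\sigma$ of $V$ is an $S$-ordering of $G$ if and only if for every $x,y\in V$ with $x<_\sigma y$ we have $N_\sigma(x,x)\not\prec_S N_\sigma(y,x)$.
   Context: Let $G=(V,E)$ be a finite (not necessarily connected) undirected graph with $n$ vertices; $N(v)$ denotes the set of neighbours of $v$. An ordering of $V$ is a bijection $\sigma:\{1,\dots,n\}\to V$; $\sigma(i)$ is the $i$th vertex and $x<_\sigma y$ means $\sigma^{-1}(x)<\sigma^{-1}(y)$. $P_f(\mathbb{N}^+)$ is the set of finite subsets of the positive integers. Given a strict partial order $\prec$ on $P_f(\mathbb{N}^+)$ and an ordering $\tau$ of $V$, the Tie-Breaking Label Search $\mathrm{TBLS}(G,\prec,\tau)$ is the procedure: set $label(v)=\emptyset$ for every $v$; for $i=1,\dots,n$: let Eligible be the set of unnumbered vertices $x$ such that there is no unnumbered vertex $y$ with $label(x)\prec label(y)$; let $v$ be the first vertex of Eligible in the ordering $\tau$; set $\sigma(i)=v$ ($v$ becomes numbered); for every unnumbered neighbour $w$ of $v$ replace $label(w)$ by $label(w)\cup\{i\}$. The output is $\sigma$. A TBLS search $S$ is specified by a strict partial order $\prec_S$ on $P_f(\mathbb{N}^+)$; an ordering $\sigma$ of $V$ is an $S$-ordering of $G$ if $\sigma=\mathrm{TBLS}(G,\prec_S,\tau)$ for some ordering $\tau$ of $V$. For vertices $u,v$ and an ordering $\sigma$, $N_\sigma(u,v)=\{i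 : \sigma(i)\in N(u)\text{ and }\sigma(i)<_\sigma v\}$. *)

(* Defs.v *)
From mathcomp Require Import all_boot finmap.
Set Implicit Arguments. Unset Strict Implicit. Unset Printing Implicit Defensive.
Local Open Scope fset_scope.

(* A graph on the finite vertex type V is an edge relation e : rel V,
   assumed symmetric and irreflexive in the theorem; N(v) = [pred w | e v w].
   An ordering sigma of V (bijection {1..n} -> V) is represented by the
   sequence [:: sigma(1); ...; sigma(n)], i.e. a duplicate-free listing of V.
   Positions are 1-based: sigma(i) = nth _ s (i-1), and the position of a
   vertex x is (index x s).+1. *)

Definition is_ordering (V : finType) (s : seq V) : bool := perm_eq s (enum V).

Definition ord_lt (V : finType) (s : seq V) (x y : V) : bool :=
  index x s < index y s.

Definition Nsig (V : finType) (e : rel V) (s : seq V) (u v : V) : {fset nat} :=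
  [fset (index z s).+1 | z in [seq z <- s | e u z && ord_lt s z v]].

Section TBLS.
Variables (V : finType) (e : rel V) (prec : rel {fset nat}) (tau : seq V).

Definition eligible (num : seq V) (lab : V -> {fset nat}) (x : V) : bool :=
  (x \notin num) && [forall y, (y \notin num) ==> ~~ prec (lab x) (lab y)].

(* Run k more iterations; i is the current step number, num the sequence
   sigma(1..i-1) of numbered vertices, lab the current labels.  v is the
   first vertex of Eligible in tau; its unnumbered neighbours get i added. *)
Fixpoint tbls_iter (k i : nat) (num : seq V) (lab : V -> {fset nat}) : seq V :=
  match k with
  | 0 => num
  | k'.+1 =>
    match ohead [seq x <- tau | eligible num lab x] with
    | None => num
    | Some v =>
        let num' := rcons num v in
        tbls_iter k' i.+1 num'
          (fun w => if (w \notin num') && e v w then i |` lab w else lab w)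
    end
  end.

Definition TBLS : seq V := tbls_iter #|V| 1 [::] (fun _ => fset0).

End TBLS.

Definition is_S_ordering (V : finType) (e : rel V) (prec : rel {fset nat})
  (sigma : seq V) : Prop :=
  exists tau : seq V, is_ordering tau /\ sigma = TBLS e prec tau.

(* Main.v *)
Require Import Defs.
From mathcomp Require Import all_boot finmap.
Set Implicit Arguments. Unset Strict Implicit. Unset Printing Implicit Defensive.
Local Open Scope fset_scope.

Section Aux.
Variables (V : finType) (e : rel V).

Definition L (s : seq V) (w : V) : {fset nat} :=
  [fset (index z s).+1 | z in [seq z <- s | e w z]].

Lemma mem_imf (f : V -> nat) (s : seq V) n :
  (n \in [fset f z | z in s]) = has (fun z => n == f z) s.
Proof.
apply/imfsetP/hasP => [[z zs ->]|[z zs /eqP ->]]; by exists z.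
Qed.

Lemma index_take_lt (s : seq V) q z : index z s < q -> index z (take q s) = index z s.
Proof.
move=> h; case: (boolP (z \in s)) => zs.
  have zt : z \in take q s by rewrite in_take.
  by rewrite -{2}(cat_take_drop q s) index_cat zt.
move: h; rewrite memNindex // => h.
by rewrite take_oversize ?memNindex // ltnW.
Qed.

Lemma Nsig_L (s : seq V) w x : Nsig e s w x = L (take (index x s) s) w.
Proof.
apply/fsetP => n; rewrite !mem_imf.
apply/hasP/hasP => [[z]|[z]].
  rewrite mem_filter => /andP[/andP[ewz lt] zs] /eqP ->.
  exists z; first by rewrite mem_filter ewz in_take.
  by rewrite index_take_lt.
rewrite mem_filter => /andP[ewz zt] /eqP ->.
have lt := index_ltn zt.
exists z; first by rewrite mem_filter ewz /ord_lt lt (mem_take zt).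
by rewrite index_take_lt.
Qed.

Hypothesis esym : symmetric e.

Lemma L_rcons (num : seq V) v w : v \notin num ->
  L (rcons num v) w = if e v w then (size num).+1 |` L num w else L num w.
Proof.
move=> vn; apply/fsetP => n.
have idx z : z \in num -> index z (rcons num v) = index z num.
  by move=> zn; rewrite -cats1 index_cat zn.
have idv : index v (rcons num v) = size num.
  by rewrite -cats1 index_cat (negPf vn) /= eqxx addn0.
rewrite /L filter_rcons esym.
case: ifP => evw; rewrite ?inE !mem_imf ?has_rcons ?idv.
  congr (_ || _).
all: apply: eq_in_has => z; rewrite mem_filter => /andP[_ zn]; by rewrite idx.
Qed.

End Aux.

Section Iter.
Variables (V : finType) (e : rel V) (prec : rel {fset nat}).
Hypothesis esym : symmetric e.

Definition Inv (num : seq V) (lab : V -> {fset nat}) :=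
  forall w, w \notin num -> lab w = L e num w.

Lemma step_inv num lab v : v \notin num -> Inv num lab ->
  Inv (rcons num v)
    (fun w => if (w \notin rcons num v) && e v w then (size num).+1 |` lab w else lab w).
Proof.
move=> vn I w; rewrite mem_rcons inE negb_or => /andP[wv wn].
by rewrite wv wn /= L_rcons // I.
Qed.

Lemma elig_conv num lab x : Inv num lab ->
  eligible prec num lab x = eligible prec num (L e num) x.
Proof.
move=> I; rewrite /eligible; case: (boolP (x \in num)) => //= xn.
rewrite I //; apply: eq_forallb => y; case: (boolP (y \in num)) => //= yn.
by rewrite I.
Qed.

Lemma tbls_fwd (tau : seq V) k : forall num lab, uniq num -> Inv num lab ->
  exists rest, tbls_iter e prec tau k (size num).+1 num lab = num ++ rest /\
    uniq (num ++ rest) /\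
    forall q x0, size num <= q -> q < size (num ++ rest) ->
      eligible prec (take q (num ++ rest)) (L e (take q (num ++ rest)))
        (nth x0 (num ++ rest) q).
Proof.
elim: k => [|k IH] num lab un I /=.
  exists [::]; rewrite cats0; split => //; split => // q x0 h1 h2.
  by move: (leq_trans h2 h1); rewrite ltnn.
case E: (ohead _) => [v|] /=; last first.
  exists [::]; rewrite cats0; split => //; split => // q x0 h1 h2.
  by move: (leq_trans h2 h1); rewrite ltnn.
have : v \in [seq x <- tau | eligible prec num lab x].
  by move: E; case: (filter _ _) => //= a l [<-]; rewrite inE eqxx.
rewrite mem_filter => /andP[ev _].
have vn : v \notin num by case/andP: ev.
have := IH (rcons num v) _ _ (step_inv vn I); rewrite size_rcons rcons_uniq vn un.
case=> // rest' [-> [U H]].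
exists (v :: rest'); rewrite -cat_rcons; split => //; split => // q x0 h1 h2.
case: (ltngtP q (size num)) => hq.
- by move: (leq_trans hq h1); rewrite ltnn.
- by apply: H => //; rewrite size_rcons.
rewrite hq -cats1 -catA take_size_cat // nth_cat ltnn subnn /=.
by rewrite -(elig_conv _ I).
Qed.


Lemma tbls_bwd (sigma : seq V) : irreflexive prec -> uniq sigma ->
  (forall y, y \in sigma) ->
  (forall x y : V, ord_lt sigma x y ->
      ~~ prec (Nsig e sigma x x) (Nsig e sigma y x)) ->
  forall rest num lab, num ++ rest = sigma -> Inv num lab ->
  tbls_iter e prec sigma (size rest) (size num).+1 num lab = sigma.
Proof.
move=> irr us all cond; elim=> [|v rest IH] num lab Hs I /=.
  by rewrite -Hs cats0.
have us' := us; rewrite -Hs cat_uniq /= in us'.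
case/and3P: us' => _ /norP[vn _] _.
have idv : index v sigma = size num by rewrite -Hs index_cat (negPf vn) /= eqxx addn0.
have tk : take (size num) sigma = num by rewrite -Hs take_size_cat.
have ev : eligible prec num lab v.
  rewrite (elig_conv _ I) /eligible vn /=; apply/forallP => y; apply/implyP => yn.
  case: (eqVneq y v) => [->|yv]; first by rewrite irr.
  have yr : y \in rest.
    by move: (all y); rewrite -Hs mem_cat (negPf yn) inE (negPf yv).
  have vy : (v == y) = false by rewrite eq_sym (negPf yv).
  have lt : ord_lt sigma v y.
    by rewrite /ord_lt idv -Hs index_cat (negPf yn) /= vy addnS ltnS leq_addr.
  by move: (cond _ _ lt); rewrite !Nsig_L idv tk.
have -> : [seq x <- sigma | eligible prec num lab x] = v :: [seq x <- rest | eligible prec num lab x].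
  rewrite -Hs filter_cat /= ev (@eq_in_filter _ _ pred0) ?filter_pred0 //.
  by move=> x xn; rewrite /eligible xn.
rewrite /=.
have := IH (rcons num v) _ _ (step_inv vn I); rewrite size_rcons; apply.
by rewrite cat_rcons.
Qed.
End Iter.

Theorem mainTheorem1 (V : finType) (e : rel V) (prec : rel {fset nat}) :
  symmetric e -> irreflexive e ->
  irreflexive prec -> transitive prec ->
  forall sigma : seq V, is_ordering sigma ->
  (is_S_ordering e prec sigma <->
   (forall x y : V, ord_lt sigma x y ->
      ~~ prec (Nsig e sigma x x) (Nsig e sigma y x))).
Proof.
move=> esym _ irr _ sigma os.
have us : uniq sigma by rewrite (perm_uniq os) enum_uniq.
have all y : y \in sigma by rewrite (perm_mem os) mem_enum.
split.
  case=> tau [_ Hsig].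
  have I0 : Inv e [::] (fun _ => fset0).
    by move=> w _; apply/fsetP => n; rewrite mem_imf inE.
  have [rest [Ht [U H]]] := @tbls_fwd V e prec esym tau #|V| [::] _ isT I0.
  have {Hsig Ht} E : sigma = rest by rewrite Hsig; exact: Ht.
  subst sigma.
  move=> x y lt.
  have xr : x \in rest by rewrite -index_mem (leq_trans lt) // index_size.
  have qs : index x rest < size rest by rewrite index_mem.
  have := H (index x rest) x (leq0n _) qs; rewrite nth_index //.
  case/andP=> _ /forallP /(_ y) /implyP F.
  rewrite !Nsig_L; apply: F.
  by rewrite /= in_take ?all // -leqNgt ltnW.
move=> cond; exists sigma; split => //.
rewrite /TBLS.
have -> : #|V| = size sigma by rewrite (perm_size os) cardE.
have I0 : Inv e [::] (fun _ => fset0).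
  by move=> w _; apply/fsetP => n; rewrite mem_imf inE.
have := (@tbls_bwd V e prec esym sigma irr us all cond sigma [::] _ erefl I0). by move=> ->.
Qed.
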